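(* Let $\Gamma$ be a weak generalised hexagon of order $(s,t)$ and let $\mathcal{S}$ be a set of mutually opposite lines of $\Gamma$. Then $|\mathcal{S}|\le st^2+1$.
   Context: A weak generalised hexagon is a point-line geometry with no ordinary $k$-gons for $2\le k<6$ in which any two elements lie in a common ordinary hexagon; order $(s,t)$ means every line has $s+1$ points and every point is on $t+1$ lines. Distance is measured in the incidence graph; two lines are opposite if they are at distance $6$. *)

(* Defs.v *)
From mathcomp Require Import all_boot.
Set Implicit Arguments. Unset Strict Implicit. Unset Printing Implicit Defensive.

Definition elt (P L : finType) := (P + L)%type.

Definition inc_adj (P L : finType) (I : P -> L -> bool) : rel (elt P L) :=
  fun x y => match x, y with
             | inl p, inr l => I p l
             | inr l, inl p => I p l
             | _, _ => false
             end.

Definition ordinary_gon (P L : finType) (I : P -> L -> bool) (k : nat)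
  (c : seq (elt P L)) : Prop :=
  [/\ size c = (2 * k)%N, uniq c & cycle (inc_adj I) c].

Definition weak_gen_hexagon (P L : finType) (I : P -> L -> bool) : Prop :=
  (forall k c, 2 <= k < 6 -> ~ ordinary_gon I k c) /\
  (forall x y : elt P L, exists c, ordinary_gon I 6 c /\ x \in c /\ y \in c).

Definition has_order (P L : finType) (I : P -> L -> bool) (s t : nat) : Prop :=
  (forall l : L, #|[set p | I p l]| = s.+1) /\
  (forall p : P, #|[set l | I p l]| = t.+1).

Fixpoint walk (P L : finType) (I : P -> L -> bool) (n : nat)
  (x y : elt P L) : bool :=
  match n with
  | 0 => x == y
  | n'.+1 => [exists z, inc_adj I x z && walk I n' z y]
  end.

Definition dist_eq (P L : finType) (I : P -> L -> bool) (x y : elt P L)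
  (d : nat) : Prop :=
  walk I d x y /\ (forall k, k < d -> ~~ walk I k x y).

Definition opposite_lines (P L : finType) (I : P -> L -> bool) (l m : L) : Prop :=
  dist_eq I (inr l) (inr m) 6.

(* Main.v *)
Require Import Defs.
From mathcomp Require Import all_boot.
Set Implicit Arguments. Unset Strict Implicit.

Lemma card_bigcup_le (I T : finType) (A : {set I}) (F : I -> {set T}) :
  #|\bigcup_(i in A) F i| <= \sum_(i in A) #|F i|.
Proof.
apply: (big_ind2 (fun (x : {set T}) y => #|x| <= y)) => //.
  by rewrite cards0.
move=> x1 y1 x2 y2 h1 h2; apply: leq_trans (leq_card_setU x1 x2) _.
exact: leq_add.
Qed.

Section G.
Variables (P L : finType) (I : P -> L -> bool).

Lemma walk_cons n (x z y : elt P L) : inc_adj I x z -> walk I n z y -> walk I n.+1 x y.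
Proof. by move=> h1 h2 /=; apply/existsP; exists z; rewrite h1. Qed.

Definition good (l n : L) := [exists a, exists b, exists c,
  [&& I a l, I a b, b != l, I c b, c != a, I c n & n != b]].

Lemma good_walk l n : good l n -> walk I 4 (inr l) (inr n).
Proof.
case/existsP=> a /existsP[b /existsP[c /and5P[h1 h2 _ h4 /and3P[_ h6 _]]]].
apply: (@walk_cons _ _ (inl a)) => //.
apply: (@walk_cons _ _ (inr b)) => //.
apply: (@walk_cons _ _ (inl c)) => //.
apply: (@walk_cons _ _ (inr n)) => //=.
Qed.

Lemma adj_sym (x y : elt P L) : inc_adj I x y = inc_adj I y x.
Proof. by case: x; case: y. Qed.
End G.

Section G.
Variables (P L : finType) (I : P -> L -> bool).
Variables (l m : L) (q : P) (Hq : I q m)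
  (h2 : ~~ walk I 2 (inr l) (inr m)) (h4 : ~~ walk I 4 (inr l) (inr m)).
Notation adj := (inc_adj I).
Notation E := (elt P L).

Lemma P1 : adj (inr l) (inl q) -> False.
Proof. move=> h; move/negP: h2; apply; apply: (walk_cons h); by apply: (walk_cons (z:=inr m)) => /=. Qed.
Lemma P2 (e1 : E) : adj (inr l) e1 -> adj e1 (inl q) -> False.
Proof. by case: e1. Qed.
Lemma P3 (e1 e2 : E) : adj (inr l) e1 -> adj e1 e2 -> adj e2 (inl q) -> False.
Proof.
case: e1 => a //; case: e2 => b //= ha hab hb.
move/negP: h4; apply; apply: (walk_cons (z:=inl a)) => //.
apply: (walk_cons (z:=inr b)) => //.
apply: (walk_cons (z:=inl q)) => //.
by apply: (walk_cons (z:=inr m)) => /=.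
Qed.
Lemma P4 (e1 e2 e3 : E) : adj (inr l) e1 -> adj e1 e2 -> adj e2 e3 -> adj e3 (inl q) -> False.
Proof. by case: e1 => a //; case: e2 => b //; case: e3. Qed.
Lemma P5 (e1 e2 e3 e4 : E) : adj (inr l) e1 -> adj e1 e2 -> adj e2 e3 -> adj e3 e4 ->
  adj e4 (inl q) -> e2 != inr l -> e3 != e1 -> e4 != e2 ->
  exists n, good I l n && I q n.
Proof.
case: e1 => a //; case: e2 => b //; case: e3 => c //; case: e4 => n //= ha hab hbc hcn hq nb nc nn.
exists n; rewrite hq andbT; apply/existsP; exists a; apply/existsP; exists b;
  apply/existsP; exists c; by rewrite ha hab nb hbc nc hcn nn.
Qed.
Lemma P6 (e1 e2 e3 e4 e5 : E) : adj (inr l) e1 -> adj e1 e2 -> adj e2 e3 -> adj e3 e4 ->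
  adj e4 e5 -> adj e5 (inl q) -> False.
Proof. by case: e1 => a //; case: e2 => b //; case: e3 => c //; case: e4 => d //; case: e5. Qed.

Lemma uniq_neq (s : seq E) x0 i j : uniq s -> i < size s -> j < size s -> i != j ->
  nth x0 s i != nth x0 s j.
Proof. by move=> u hi hj; rewrite nth_uniq. Qed.

Lemma proj (c : seq E) : size c = 12 -> uniq c -> cycle adj c -> inr l \in c ->
  inl q \in c -> exists n, good I l n && I q n.
Proof.
move=> Hs Hu Hc Hx Hy.
case/rot_to: Hx Hs Hu Hc Hy => i c' Hr.
rewrite -(size_rot i) -(rot_uniq i) -(rot_cycle i) -(mem_rot i) Hr.
case: c' {Hr} => [|e1 [|e2 [|e3 [|e4 [|e5 [|e6 [|e7 [|e8 [|e9 [|e10 [|e11 [|? ?]]]]]]]]]]]] // _.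
set s := (inr l :: _) => Hu.
move=> /= /andP[a1 /andP[a2 /andP[a3 /andP[a4 /andP[a5 /andP[a6 /andP[a7 /andP[a8 /andP[a9 /andP[a10 /andP[a11 /andP[a12 _]]]]]]]]]]]].
have b12 : adj (inr l) e11 by rewrite adj_sym.
have b11 : adj e11 e10 by rewrite adj_sym.
have b10 : adj e10 e9 by rewrite adj_sym.
have b9 : adj e9 e8 by rewrite adj_sym.
have b8 : adj e8 e7 by rewrite adj_sym.
have N := @uniq_neq s (inr l) _ _ Hu.
rewrite !inE.
case/orP=> [/eqP//|]; case/orP=> [/eqP ?|]; first by subst; case: (P1 a1).
case/orP=> [/eqP ?|]; first by subst; case: (P2 a1 a2).
case/orP=> [/eqP ?|]; first by subst; case: (P3 a1 a2 a3).
case/orP=> [/eqP ?|]; first by subst; case: (P4 a1 a2 a3 a4).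
case/orP=> [/eqP ?|]; first by subst; apply: (P5 a1 a2 a3 a4 a5); [exact: (N 2 0)|exact: (N 3 1)|exact: (N 4 2)].
case/orP=> [/eqP ?|]; first by subst; case: (P6 a1 a2 a3 a4 a5 a6).
case/orP=> [/eqP ?|]; first by subst; apply: (P5 b12 b11 b10 b9 b8); [exact: (N 10 0)|exact: (N 9 11)|exact: (N 8 10)].
case/orP=> [/eqP ?|]; first by subst; case: (P4 b12 b11 b10 b9).
case/orP=> [/eqP ?|]; first by subst; case: (P3 b12 b11 b10).
case/orP=> [/eqP ?|]; first by subst; case: (P2 b12 b11).
by move/eqP=> ?; subst; case: (P1 b12).
Qed.

End G.

Theorem mainTheorem4 (P L : finType) (I : P -> L -> bool) (s t : nat)
  (S : {set L}) :
  weak_gen_hexagon I -> has_order I s t ->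
  (forall l m, l \in S -> m \in S -> l != m -> opposite_lines I l m) ->
  #|S| <= s * t ^ 2 + 1.
Proof.
move=> [Hno Hhex] [Hs Ht] Hopp.
case: (set_0Vmem S) => [->|[l lS]]; first by rewrite cards0.
have nw : forall x y k, x \in S -> y \in S -> x != y -> k < 6 -> ~~ walk I k (inr x) (inr y).
  by move=> x y k xS yS xy k6; have [_ ] := Hopp x y xS yS xy; apply.
have proj' : forall m q, m \in S :\ l -> I q m -> exists n, good I l n && I q n.
  move=> m q; rewrite !inE => /andP[ml mS] qm.
  have [c [[c1 c2 c3] [c4 c5]]] := Hhex (inr l) (inl q).
  apply: (proj qm _ _ c1 c2 c3 c4 c5); apply: nw => //; by rewrite eq_sym.
pose f (x : L * P) : L := odflt l [pick n | good I l n && I x.2 n].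
pose Q := [set x : L * P | (x.1 \in S :\ l) && I x.2 x.1].
have fP : forall x, x \in Q -> good I l (f x) && I x.2 (f x).
  case=> m q; rewrite inE /= => /andP[mS qm]; rewrite /f.
  case: pickP => [n -> //|H]; have [n /andP[g1 g2]] := proj' m q mS qm.
  by move: (H n); rewrite g1 g2.
have finj : {in Q &, injective f}.
  case=> m q [m' q'] xQ yQ /= E.
  have /andP[g1 g2] := fP _ xQ; have /andP[_ g2'] := fP _ yQ.
  move: xQ yQ E g1 g2 g2'; rewrite !inE /= => /andP[/andP[ml mS] qm] /andP[/andP[m'l m'S] q'm'].
  set n := f (m, q) => E g1 g2 g2'; rewrite -E in g2'.
  have [mm'|mm'] := eqVneq m m'.
    subst m'; have [qq'|qq'] := eqVneq q q'; first by subst.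
    have [nm|nm] := eqVneq n m.
      by move: (nw l m 4 lS mS); rewrite eq_sym ml -nm (good_walk g1); move/(_ isT isT).
    exfalso; apply: (Hno 2 [:: inl q; inr m; inl q'; inr n]) => //.
    split => //=; last by rewrite qm q'm' g2 g2'.
    have e1 : (inl q == inl q' :> elt P L) = (q == q') by apply/eqP/eqP => [[]|->].
    have e2 : (inr m == inr n :> elt P L) = (m == n) by apply/eqP/eqP => [[]|->].
    have e3 : (inl q == inr n :> elt P L) = false by apply/eqP.
    by rewrite !inE /= e1 e2 e3 (negbTE qq') eq_sym nm.
  have := nw m m' 4 mS m'S mm' isT; move/negP; case.
  apply: (walk_cons (z:=inl q)) => //; apply: (walk_cons (z:=inr n)) => //.
  apply: (walk_cons (z:=inl q')) => //; by apply: (walk_cons (z:=inr m')) => /=.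
pose pts (k : L) := [set p | I p k].
pose lns (p : P) := [set k | I p k].
have sub : f @: Q \subset \bigcup_(a in pts l) \bigcup_(b in lns a :\ l)
     \bigcup_(c in pts b :\ a) (lns c :\ b).
  apply/subsetP=> _ /imsetP[x xQ ->]; have /andP[g _] := fP x xQ.
  case/existsP: g => a /existsP[b /existsP[c /and5P[h1 h2 h3 h4 /and3P[h5 h6 h7]]]].
  apply/bigcupP; exists a; first by rewrite inE.
  apply/bigcupP; exists b; first by rewrite !inE h3.
  apply/bigcupP; exists c; first by rewrite !inE h5.
  by rewrite !inE h7.
have cl : forall a k, I a k -> #|lns a :\ k| = t.
  move=> a k al; have := Ht a; rewrite (cardsD1 k) inE al => -[]; done.
have cp : forall b a, I a b -> #|pts b :\ a| = s.
  move=> b a ab; have := Hs b; rewrite (cardsD1 a) inE ab => -[]; done.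
have up : #|f @: Q| <= s.+1 * (t * (s * t)).
  apply: leq_trans (subset_leq_card sub) _.
  apply: leq_trans (card_bigcup_le _ _) _.
  rewrite -(Hs l) -sum_nat_const; apply: leq_sum => a; rewrite inE => al.
  apply: leq_trans (card_bigcup_le _ _) _.
  rewrite -{1}(cl a l al) -sum_nat_const; apply: leq_sum => b; rewrite !inE => /andP[_ ab].
  apply: leq_trans (card_bigcup_le _ _) _.
  rewrite -{1}(cp b a ab) -sum_nat_const; apply: leq_sum => c; rewrite !inE => /andP[_ cb].
  by rewrite (cl c b cb) ?leqnn.
have cQ : #|Q| = #|S :\ l| * s.+1.
  rewrite -sum1_card (eq_bigl (fun p : L * P => (p.1 \in S :\ l) && I p.2 p.1)); last first.
    by move=> x; rewrite inE.
  rewrite -(pair_big_dep (fun m => m \in S :\ l) (fun m q => I q m) (fun _ _ => 1)) /=.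
  rewrite -sum_nat_const; apply: eq_bigr => m _; rewrite sum1dep_card; exact: Hs.
rewrite (card_in_imset finj) cQ mulnC in up.
rewrite (cardsD1 l) lS add1n addn1 ltnS -(leq_pmul2l (ltn0Sn s)).
by move: up; rewrite expnS expn1 [s * (t * t)]mulnCA.
Qed.
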